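(* Let $a\ge b\ge2$ be integers with $a/b\in\mathbb Z$, $\beta>1$ the positive root of $\beta^2=a\beta+b$, and $\beta'=a-\beta$. Then for each $n\in\mathbb N$, \[ \inf_{j\in\mathbb Z}P_{\mathbf h(j)}(\beta')\in\Big\{\mu_n+(\beta')^{2n}\tfrac{b-1}{1-(\beta')^2}\,t:\ t\in[\beta',0]\Big\}, \qquad \mu_n=\min_{j\in\{0,1,\dots,b^n-1\}}P_{\mathrm{Pref}_{2n}(\mathbf h(j))}(\beta'). \]
   Context: For an algebraic integer $\beta$, the $\beta$-adic expansion of $x\in\mathbb Z[\beta]$ is the unique infinite word $\mathbf h(x)=u_0u_1u_2\cdots$ with $u_n\in\{0,1,\dots,|N(\beta)|-1\}$ such that $x-\sum_{i=0}^{n-1}u_i\beta^i\in\beta^n\mathbb Z[\beta]$ for all $n\in\mathbb N$; here $|N(\beta)|=b$. $\mathrm{Pref}_n(\mathbf u)$ denotes the prefix of length $n$ of an infinite word $\mathbf u$. For a finite word $w=w_0\cdots w_{k-1}$, $P_w(X)=\sum_{i=0}^{k-1}w_iX^i$; for an infinite word, $P_{\mathbf u}(X)=\sum_{i\ge0}u_iX^i$. *)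

(* Defs.v *)
From Stdlib Require Import Reals ZArith.
Open Scope R_scope.

Fixpoint sum_lt (f : nat -> R) (n : nat) : R :=
  match n with
  | O => 0
  | S k => sum_lt f k + f k
  end.

(* u is a beta-adic expansion of x in Z[beta] with digits in {0,...,b-1}:
   for all n, x - sum_{i<n} u_i beta^i lies in beta^n Z[beta],
   where Z[beta] = { p + q beta : p q in Z } (beta is quadratic). *)
Definition is_beta_expansion (beta : R) (b : Z) (x : R) (u : nat -> Z) : Prop :=
  (forall i, (0 <= u i < b)%Z) /\
  forall n : nat, exists p q : Z,
    x - sum_lt (fun i => IZR (u i) * beta ^ i) n = beta ^ n * (IZR p + IZR q * beta).

Definition P_pref (u : nat -> Z) (k : nat) (x : R) : R :=
  sum_lt (fun i => IZR (u i) * x ^ i) k.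

Definition P_inf_is (u : nat -> Z) (x y : R) : Prop :=
  infinite_sum (fun i => IZR (u i) * x ^ i) y.

Definition is_lower_bound (E : R -> Prop) (m : R) : Prop :=
  forall y, E y -> m <= y.

Definition is_glb (E : R -> Prop) (m : R) : Prop :=
  is_lower_bound E m /\ forall m', is_lower_bound E m' -> m' <= m.

(* Main.v *)
Require Import Defs.
From Stdlib Require Import Reals ZArith Lia Lra Znumtheory.
Open Scope R_scope.

Definition Tst (a b : Z) (s : Z*Z) : Z*Z := (snd s - a * (fst s / b), fst s / b)%Z.
Fixpoint st (a b : Z) (s : Z*Z) (n : nat) : Z*Z :=
  match n with O => s | S n' => st a b (Tst a b s) n' end.
Definition dig a b s n := (fst (st a b s n) mod b)%Z.

Lemma Tst_add a b p q u v : b <> 0%Z ->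
  Tst a b (p + b*u, q + v)%Z =
  (fst (Tst a b (p,q)) + (v - a*u), snd (Tst a b (p,q)) + u)%Z.
Proof. intros. unfold Tst; simpl. rewrite (Z.mul_comm b u), Z.div_add by auto. f_equal; ring. Qed.

Lemma st_S a b n : forall s, st a b s (S n) = Tst a b (st a b s n).
Proof. induction n; intros s; [reflexivity|]. change (st a b (Tst a b s) (S n) = Tst a b (st a b (Tst a b s) n)). apply IHn. Qed.

Lemma Gdig a b c (hb : b <> 0%Z) (hc : a = (c * b)%Z) : forall N s x y,
  (forall i, (i < 2*N)%nat ->
     dig a b (fst s + b^Z.of_nat N * x, snd s + b^Z.of_nat N * y)%Z i = dig a b s i) /\
  exists X Y, st a b (fst s + b^Z.of_nat N * x, snd s + b^Z.of_nat N * y)%Z (2*N)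
     = (fst (st a b s (2*N)) + X, snd (st a b s (2*N)) + Y)%Z /\ (X mod b = x mod b)%Z.
Proof.
  induction N as [|N IH]; intros [p q] x y; cbn [fst snd].
  - split; [intros; lia|]. exists x, y. split; [|reflexivity]. change (b ^ Z.of_nat 0)%Z with 1%Z. rewrite !Z.mul_1_l. reflexivity.
  - rewrite Nat2Z.inj_succ, Z.pow_succ_r by lia.
    set (B := (b ^ Z.of_nat N)%Z).
    destruct (Tst a b (p,q)) as [p1 q1] eqn:E1.
    destruct (Tst a b (p1,q1)) as [p2 q2] eqn:E2.
    assert (H1 : Tst a b (p + b*B*x, q + b*B*y)%Z = (p1 + b*(B*(y - c*x)), q1 + B*x)%Z).
    { replace (p + b*B*x)%Z with (p + b*(B*x))%Z by ring. rewrite Tst_add by auto.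
      rewrite E1. simpl. f_equal. subst a. ring. }
    assert (H2 : Tst a b (p1 + b*(B*(y - c*x)), q1 + B*x)%Z =
                 (p2 + B*(x - a*(y-c*x)), q2 + B*(y-c*x))%Z).
    { rewrite Tst_add by auto. rewrite E2. simpl. f_equal; ring. }
    destruct (IH (p2,q2) (x - a*(y-c*x))%Z (y - c*x)%Z) as [IHd [X [Y [IHe IHm]]]].
    cbn [fst snd] in IHd, IHe. fold B in IHd, IHe.
    replace (2 * S N)%nat with (S (S (2*N))) by lia.
    split.
    + intros i Hi. destruct i as [|[|i]].
      * unfold dig; simpl. replace (p + b*B*x)%Z with (p + (B*x)*b)%Z by ring.
        apply Z.mod_add; auto.
      * unfold dig. change (st a b ?s 1) with (Tst a b s). rewrite H1, E1. simpl.
        replace (p1 + b*(B*(y-c*x)))%Z with (p1 + (B*(y-c*x))*b)%Z by ring.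
        apply Z.mod_add; auto.
      * unfold dig. change (st a b ?s (S (S i))) with (st a b (Tst a b (Tst a b s)) i).
        rewrite H1, H2, E1, E2. apply IHd. lia.
    + exists X, Y. change (st a b ?s (S (S ?i))) with (st a b (Tst a b (Tst a b s)) i).
      rewrite H1, H2, E1, E2. rewrite IHe. split; [reflexivity|].
      rewrite IHm. subst a. replace (x - c*b*(y-c*x))%Z with (x + (-(c*(y-c*x)))*b)%Z by ring.
      apply Z.mod_add; auto.
Qed.

Lemma irrat (a b : Z) (hb : (2 <= b)%Z) (hba : (b <= a)%Z) (beta : R)
  (hbeta1 : 1 < beta) (hroot : beta ^ 2 = IZR a * beta + IZR b) :
  forall A B : Z, IZR A + IZR B * beta = 0 -> A = 0%Z /\ B = 0%Z.
Proof.
  intros A B H.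
  destruct (Z.eq_dec B 0) as [HB|HB].
  { subst. split; auto. apply eq_IZR. simpl in H. lra. }
  exfalso.
  set (r := (-A)%Z).
  assert (Hbr : beta * IZR B = IZR r) by (unfold r; rewrite opp_IZR; lra).
  assert (Hint : (r*r = a*r*B + b*B*B)%Z).
  { apply eq_IZR. rewrite !plus_IZR, !mult_IZR. rewrite <- Hbr.
    replace (beta*IZR B*(beta*IZR B)) with (beta^2 * (IZR B * IZR B)) by ring.
    rewrite hroot. ring. }
  set (g := Z.gcd r B).
  assert (Hg0 : g <> 0%Z) by (unfold g; intro E; apply Z.gcd_eq_0 in E; lia).
  destruct (Z.gcd_divide_l r B) as [r' Hr']. destruct (Z.gcd_divide_r r B) as [B' HB'].
  fold g in Hr', HB'.
  assert (Hcop : Z.gcd r' B' = 1%Z).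
  { assert (E := Z.gcd_div_gcd r B g Hg0 eq_refl).
    rewrite Hr', HB', !Z.div_mul in E by auto. exact E. }
  assert (Hint' : (r'*r' = a*r'*B' + b*B'*B')%Z).
  { apply (Z.mul_reg_r _ _ (g*g)); [nia|]. rewrite Hr', HB' in Hint. nia. }
  assert (Hd : (B' | r' * r')%Z) by (exists (a*r' + b*B')%Z; nia).
  assert (Hd2 : (B' | r')%Z).
  { apply (Z.gauss _ r'); auto. rewrite Z.gcd_comm. auto. }
  assert (Hd3 : (B' | 1)%Z).
  { rewrite <- Hcop. apply Z.gcd_greatest; auto. apply Z.divide_refl. }
  assert (Hbr' : beta * IZR B' = IZR r').
  { apply (Rmult_eq_reg_r (IZR g)); [|apply not_0_IZR; auto].
    rewrite Rmult_assoc, <- !mult_IZR, <- Hr', <- HB'. auto. }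
  assert (Hba' : beta > IZR a).
  { assert (0 < IZR b) by (apply IZR_lt; lia). nra. }
  destruct (Z.divide_1_r _ Hd3) as [E|E]; rewrite E in Hbr', Hint'.
  - assert (Hw : beta = IZR r') by lra. rewrite Hw in Hba'. apply lt_IZR in Hba'.
    assert (r' * (r' - a) = b)%Z by nia. assert (r' - a >= 1)%Z by lia. nia.
  - assert (Hw : beta = IZR (-r')) by (rewrite opp_IZR; change (-(1))%Z with (-1)%Z in Hbr'; lra). rewrite Hw in Hba'. apply lt_IZR in Hba'.
    assert ((-r') * ((-r') - a) = b)%Z by nia. assert ((-r') - a >= 1)%Z by lia. nia.
Qed.

Lemma link_step (a b : Z) (hb : (2 <= b)%Z) (beta : R)
  (hroot : beta ^ 2 = IZR a * beta + IZR b)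
  (Hirr : forall A B : Z, IZR A + IZR B * beta = 0 -> A = 0%Z /\ B = 0%Z)
  (x : R) (u : nat -> Z) (hu : forall i, (0 <= u i < b)%Z) (n : nat) (P Q p' q' : Z)
  (E0 : x - sum_lt (fun i => IZR (u i) * beta ^ i) n = beta ^ n * (IZR P + IZR Q * beta))
  (E1 : x - sum_lt (fun i => IZR (u i) * beta ^ i) (S n) = beta ^ (S n) * (IZR p' + IZR q' * beta)) :
  u n = (P mod b)%Z /\ (p', q') = Tst a b (P, Q).
Proof.
  simpl in E1.
  set (X := beta ^ n) in *. set (S := sum_lt (fun i => IZR (u i) * beta ^ i) n) in *.
  assert (HX : X <> 0).
  { unfold X. apply pow_nonzero. intro E. subst beta. simpl in hroot.
    assert (IZR b = 0) by lra. apply eq_IZR in H. lia. }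
  assert (Hk : X * (IZR (P - u n - q' * b) + IZR (Q - p' - a * q') * beta) = 0).
  { rewrite !minus_IZR, !mult_IZR.
    assert (Hq : X * IZR q' * beta ^ 2 = X * IZR q' * (IZR a * beta + IZR b)) by (rewrite hroot; auto).
    simpl in Hq. lra. }
  apply Rmult_integral in Hk. destruct Hk as [Hk|Hk]; [contradiction|].
  apply Hirr in Hk. destruct Hk as [Hk1 Hk2].
  assert (Hd : q' = (P / b)%Z).
  { apply (Z.div_unique _ _ _ (u n)); [left; apply hu|lia]. }
  assert (Hm : u n = (P mod b)%Z).
  { apply (Z.mod_unique _ _ q'); [left; apply hu|lia]. }
  split; auto. unfold Tst; simpl. rewrite <- Hd. f_equal. lia.
Qed.

Lemma link (a b : Z) (hb : (2 <= b)%Z) (beta : R)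
  (hroot : beta ^ 2 = IZR a * beta + IZR b)
  (Hirr : forall A B : Z, IZR A + IZR B * beta = 0 -> A = 0%Z /\ B = 0%Z)
  (x : Z) (u : nat -> Z) (hu : is_beta_expansion beta b (IZR x) u) :
  forall n, u n = dig a b (x, 0%Z) n.
Proof.
  destruct hu as [hd he].
  assert (Hall : forall n, IZR x - sum_lt (fun i => IZR (u i) * beta ^ i) n =
     beta ^ n * (IZR (fst (st a b (x,0%Z) n)) + IZR (snd (st a b (x,0%Z) n)) * beta)).
  { induction n.
    - simpl. ring.
    - destruct (he (S n)) as [p' [q' Hp]].
      destruct (link_step a b hb beta hroot Hirr _ u hd n _ _ p' q' IHn Hp) as [_ HT].
      rewrite <- surjective_pairing in HT. rewrite st_S, <- HT. exact Hp. }
  intros n. destruct (he (S n)) as [p' [q' Hp]].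
  destruct (link_step a b hb beta hroot Hirr _ u hd n _ _ p' q' (Hall n) Hp) as [Hu _].
  rewrite Hu. reflexivity.
Qed.

Lemma sum_lt_ext f g L : (forall i, (i < L)%nat -> f i = g i) -> sum_lt f L = sum_lt g L.
Proof. induction L; intros H; simpl; auto. rewrite IHL, H; auto. Qed.

Lemma sum_lt_shift f L : sum_lt f (S L) = f 0%nat + sum_lt (fun i => f (S i)) L.
Proof. induction L; simpl in *; [ring|]. rewrite IHL. ring. Qed.

Lemma sum_lt_split f s L : sum_lt f (s + L) = sum_lt f s + sum_lt (fun i => f (s + i)%nat) L.
Proof. induction L; simpl. rewrite Nat.add_0_r; ring. rewrite Nat.add_succ_r. simpl. rewrite IHL. ring. Qed.

Lemma sum_f_R0_lt f n : sum_f_R0 f n = sum_lt f (S n).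
Proof. induction n; simpl in *; [ring|]. rewrite IHn. ring. Qed.

Lemma tail (r : R) (b : Z) (hr : -1 < r < 0) (hb : (2 <= b)%Z) (u : nat -> Z)
  (hu : forall i, (0 <= u i < b)%Z) : forall L s, exists t, r <= t <= 1 /\
  sum_lt (fun i => IZR (u (s+i)%nat) * r^(s+i)) L = r^s * ((IZR b - 1)/(1 - r^2)) * t.
Proof.
  assert (Hr2 : 0 < 1 - r^2) by (simpl; nra).
  assert (Hb : 2 <= IZR b) by (apply IZR_le; lia).
  set (C := (IZR b - 1)/(1 - r^2)).
  assert (HC : C * (1 - r^2) = IZR b - 1) by (unfold C; field; lra).
  assert (HCp : 0 < C) by (unfold C; apply Rdiv_lt_0_compat; lra).
  induction L; intros s.
  - exists 0. split; [lra|]. simpl. ring.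
  - destruct (IHL (S s)) as [t' [Ht' He]].
    rewrite sum_lt_shift.
    rewrite (sum_lt_ext _ (fun i => IZR (u (S s + i)%nat) * r ^ (S s + i)) L).
    2:{ intros i _. rewrite Nat.add_succ_r. reflexivity. }
    rewrite He. rewrite Nat.add_0_r.
    assert (Hu0 : 0 <= IZR (u s)) by (apply IZR_le; apply hu).
    assert (Hu1 : IZR (u s) <= IZR b - 1) by (rewrite <- minus_IZR; apply IZR_le; specialize (hu s); lia).
    exists (IZR (u s) / C + r * t'). split.
    + assert (H1 : IZR (u s) / C <= 1 - r^2).
      { apply (Rmult_le_reg_r C); auto. unfold Rdiv. rewrite Rmult_assoc, Rinv_l by lra. lra. }
      assert (H2 : 0 <= IZR (u s) / C) by (unfold Rdiv; apply Rmult_le_pos; [lra|left; apply Rinv_0_lt_compat; lra]).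
      simpl in H1. split; nra.
    + simpl. field. lra.
Qed.

Lemma lim_bounds f y s lo hi : infinite_sum f y ->
  (forall n, (n >= s)%nat -> lo <= sum_f_R0 f n <= hi) -> lo <= y <= hi.
Proof.
  intros Hy Hb. split.
  - destruct (Rle_or_lt lo y) as [H|H]; auto. exfalso.
    destruct (Hy (lo - y)) as [N HN]; [lra|].
    specialize (HN (max N s) (Nat.le_max_l _ _)). specialize (Hb (max N s) (Nat.le_max_r _ _)).
    unfold Rdist in HN. apply Rabs_def2 in HN. lra.
  - destruct (Rle_or_lt y hi) as [H|H]; auto. exfalso.
    destruct (Hy (y - hi)) as [N HN]; [lra|].
    specialize (HN (max N s) (Nat.le_max_l _ _)). specialize (Hb (max N s) (Nat.le_max_r _ _)).
    unfold Rdist in HN. apply Rabs_def2 in HN. lra.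
Qed.

Lemma pow2_pos r N : r <> 0 -> 0 < r ^ (2 * N).
Proof. intros. rewrite pow_mult. apply pow_lt. simpl. nra. Qed.

Lemma series_bounds (r : R) (b : Z) (hr : -1 < r < 0) (hb : (2 <= b)%Z) (u : nat -> Z)
  (hu : forall i, (0 <= u i < b)%Z) y (Hy : infinite_sum (fun i => IZR (u i) * r^i) y) N :
  sum_lt (fun i => IZR (u i) * r^i) (2*N) + r^(2*N) * ((IZR b - 1)/(1 - r^2)) * r <= y <=
  sum_lt (fun i => IZR (u i) * r^i) (2*N) + r^(2*N) * ((IZR b - 1)/(1 - r^2)).
Proof.
  assert (Hr2 : 0 < 1 - r^2) by (simpl; nra).
  assert (Hb : 2 <= IZR b) by (apply IZR_le; lia).
  assert (HCp : 0 < (IZR b - 1)/(1 - r^2)) by (apply Rdiv_lt_0_compat; lra).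
  assert (HP := pow2_pos r N ltac:(lra)).
  apply (lim_bounds (fun i => IZR (u i) * r^i) _ (2*N)); auto.
  intros n Hn. rewrite sum_f_R0_lt.
  replace (S n) with (2*N + (S n - 2*N))%nat by lia.
  rewrite sum_lt_split.
  destruct (tail r b hr hb u hu (S n - 2*N) (2*N)) as [t [Ht He]].
  rewrite He. assert (HD : 0 < r^(2*N) * ((IZR b - 1)/(1 - r^2))) by (apply Rmult_lt_0_compat; auto).
  split; apply Rplus_le_compat_l.
  - apply Rmult_le_compat_l; lra.
  - rewrite <- (Rmult_1_r (r ^ (2 * N) * ((IZR b - 1) / (1 - r ^ 2)))) at 2. apply Rmult_le_compat_l; lra.
Qed.

Lemma series_exists (r : R) (b : Z) (hr : -1 < r < 0) (hb : (2 <= b)%Z) (u : nat -> Z)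
  (hu : forall i, (0 <= u i < b)%Z) : exists y, infinite_sum (fun i => IZR (u i) * r^i) y.
Proof.
  assert (Hr2 : 0 < 1 - r^2) by (simpl; nra).
  assert (Hb : 2 <= IZR b) by (apply IZR_le; lia).
  set (C := (IZR b - 1)/(1 - r^2)).
  assert (HCp : 0 < C) by (apply Rdiv_lt_0_compat; lra).
  set (f := fun i => IZR (u i) * r^i).
  assert (Hc : Cauchy_crit (fun n => sum_f_R0 f n)).
  { intros eps Heps.
    destruct (pow_lt_1_zero r ltac:(rewrite Rabs_left; lra) (eps / (2*C))) as [N HN].
    { apply Rdiv_lt_0_compat; lra. }
    exists N. intros n m Hn Hm.
    assert (Key : forall k, (k >= N)%nat -> Rabs (sum_f_R0 f k - sum_lt f N) <= Rabs (r^N) * C).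
    { intros k Hk. rewrite sum_f_R0_lt. replace (S k) with (N + (S k - N))%nat by lia.
      rewrite sum_lt_split.
      destruct (tail r b hr hb u hu (S k - N) N) as [t [Ht He]].
      change (sum_lt (fun i => f (N+i)%nat) (S k - N)) with (sum_lt (fun i => IZR (u (N+i)%nat) * r^(N+i)) (S k - N)).
      rewrite He. fold C. replace (sum_lt f N + r ^ N * C * t - sum_lt f N) with (r^N * C * t) by ring.
      rewrite !Rabs_mult. rewrite (Rabs_right C) by lra.
      assert (Rabs t <= 1) by (apply Rabs_le; lra).
      assert (0 <= Rabs (r^N)) by apply Rabs_pos. rewrite <- (Rmult_1_r (Rabs (r^N) * C)) at 2. apply Rmult_le_compat_l; [apply Rmult_le_pos|]; lra. }
    specialize (HN N (le_n N)).
    assert (HNe : Rabs (r^N) * C < eps / 2).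
    { apply (Rmult_lt_compat_r C) in HN; auto. unfold Rdiv in HN.
      replace (eps * / (2 * C) * C) with (eps / 2) in HN by (field; lra). exact HN. }
    unfold Rdist.
    replace (sum_f_R0 f n - sum_f_R0 f m) with ((sum_f_R0 f n - sum_lt f N) - (sum_f_R0 f m - sum_lt f N)) by ring.
    eapply Rle_lt_trans; [apply Rabs_triang|]. rewrite Rabs_Ropp.
    pose proof (Key n Hn) as K1. pose proof (Key m Hm) as K2. lra. }
  destruct (R_complete _ Hc) as [l Hl]. exists l. exact Hl.
Qed.

Lemma min_exists (g : Z -> R) (K : nat) : exists j0, (0 <= j0 <= Z.of_nat K)%Z /\
  forall j, (0 <= j <= Z.of_nat K)%Z -> g j0 <= g j.
Proof.
  induction K.
  - exists 0%Z. split; [simpl; lia|]. intros j Hj. replace j with 0%Z by (simpl in Hj; lia). lra.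
  - destruct IHK as [j0 [H0 H1]].
    destruct (Rle_or_lt (g j0) (g (Z.of_nat (S K)))) as [H|H].
    + exists j0. split; [lia|]. intros j Hj.
      destruct (Z.eq_dec j (Z.of_nat (S K))) as [E|E]; [subst; auto|]. apply H1. lia.
    + exists (Z.of_nat (S K)). split; [lia|]. intros j Hj.
      destruct (Z.eq_dec j (Z.of_nat (S K))) as [E|E]; [subst; lra|].
      specialize (H1 j ltac:(lia)). lra.
Qed.

Theorem proposition6 (a b : Z) (hb : (2 <= b)%Z) (hba : (b <= a)%Z)
  (hdiv : (b | a)%Z)
  (beta : R) (hbeta1 : 1 < beta) (hroot : beta ^ 2 = IZR a * beta + IZR b)
  (h : Z -> nat -> Z)
  (hh : forall j : Z, is_beta_expansion beta b (IZR j) (h j))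
  (n : nat) :
  let beta' := IZR a - beta in
  exists m mu : R,
    is_glb (fun y => exists j : Z, P_inf_is (h j) beta' y) m /\
    ((exists j : Z, (0 <= j < b ^ Z.of_nat n)%Z /\ mu = P_pref (h j) (2 * n) beta') /\
     (forall j : Z, (0 <= j < b ^ Z.of_nat n)%Z -> mu <= P_pref (h j) (2 * n) beta')) /\
    exists t : R, beta' <= t <= 0 /\
      m = mu + beta' ^ (2 * n) * ((IZR b - 1) / (1 - beta' ^ 2)) * t.
Proof.
  intros r.
  assert (Hr : r = IZR a - beta) by reflexivity. clearbody r.
  destruct hdiv as [c hc].
  assert (Hbz : b <> 0%Z) by lia.
  assert (HbR : 2 <= IZR b) by (apply IZR_le; lia).
  assert (HaR : IZR b <= IZR a) by (apply IZR_le; lia).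
  assert (Hba' : beta > IZR a) by (simpl in hroot; nra).
  assert (Hr1 : -1 < r < 0).
  { split; [|lra]. destruct (Rle_or_lt 1 (beta - IZR a)) as [H|H]; [|lra].
    exfalso. simpl in hroot. nra. }
  assert (Hirr := irrat a b hb hba beta hbeta1 hroot).
  assert (Hlink : forall j i, h j i = dig a b (j, 0%Z) i).
  { intros j i. apply (link a b hb beta hroot Hirr j (h j) (hh j)). }
  assert (Hd : forall j i, (0 <= h j i < b)%Z) by (intros j; apply (proj1 (hh j))).
  assert (HbN : forall N, (0 < b ^ Z.of_nat N)%Z) by (intros; apply Z.pow_pos_nonneg; lia).
  assert (F1 : forall j N i, (i < 2*N)%nat -> h j i = h (j mod b ^ Z.of_nat N)%Z i).
  { intros j N i Hi. rewrite !Hlink.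
    destruct (Gdig a b c Hbz hc N ((j mod b ^ Z.of_nat N)%Z, 0%Z) (j / b ^ Z.of_nat N)%Z 0%Z) as [Hg _].
    specialize (Hg i Hi). cbn [fst snd] in Hg. rewrite <- Hg. f_equal. f_equal.
    - specialize (HbN N). rewrite Z.add_comm, <- Z.div_mod; lia.
    - ring. }
  assert (F2 : forall j N, exists k, h (j + b ^ Z.of_nat N * k)%Z (2*N)%nat = 0%Z /\
       forall i, (i < 2*N)%nat -> h (j + b ^ Z.of_nat N * k)%Z i = h j i).
  { intros j N. set (P := fst (st a b (j, 0%Z) (2*N))).
    destruct (Gdig a b c Hbz hc N (j, 0%Z) (-P)%Z 0%Z) as [Hg [X [Y [He Hm]]]].
    cbn [fst snd] in Hg, He.
    replace (0 + b ^ Z.of_nat N * 0)%Z with 0%Z in Hg, He by ring.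
    exists (-P)%Z. split.
    - rewrite Hlink. unfold dig. rewrite He. cbn [fst]. fold P.
      rewrite Zplus_mod, Hm, <- Zplus_mod. replace (P + - P)%Z with 0%Z by ring. apply Zmod_0_l.
    - intros i Hi. rewrite !Hlink. apply Hg; auto. }
  set (C := (IZR b - 1) / (1 - r^2)).
  assert (Hr2 : 0 < 1 - r^2) by (simpl; nra).
  assert (HC : 0 < C) by (apply Rdiv_lt_0_compat; lra).
  set (f := fun j => P_pref (h j) (2*n) r).
  destruct (min_exists f (Z.to_nat (b ^ Z.of_nat n - 1))) as [j0 [Hj0 Hmin]].
  rewrite Z2Nat.id in Hj0, Hmin by (specialize (HbN n); lia).
  set (mu := f j0).
  assert (Hmu : forall j, mu <= P_pref (h j) (2*n) r).
  { intros j. unfold mu. 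
    assert (E : P_pref (h j) (2*n) r = f (j mod b ^ Z.of_nat n)%Z).
    { unfold f, P_pref. apply sum_lt_ext. intros i Hi. rewrite <- F1; auto. }
    rewrite E. apply Hmin. specialize (HbN n).
    pose proof (Z.mod_pos_bound j (b ^ Z.of_nat n) HbN). lia. }
  set (E := fun y => exists j : Z, P_inf_is (h j) r y).
  set (L0 := mu + r ^ (2*n) * C * r).
  assert (HL0 : forall y, E y -> L0 <= y).
  { intros y [j Hy]. destruct (series_bounds r b Hr1 hb (h j) (Hd j) y Hy n) as [H1 _].
    specialize (Hmu j). unfold P_pref in Hmu. unfold L0, C. lra. }
  destruct (series_exists r b Hr1 hb (h 0%Z) (Hd 0%Z)) as [y0 Hy0].
  destruct (completeness (fun z => E (- z))) as [l [Hl1 Hl2]].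
  { exists (- L0). intros z Hz. specialize (HL0 _ Hz). lra. }
  { exists (- y0). exists 0%Z. rewrite Ropp_involutive. exact Hy0. }
  set (m := - l).
  assert (Hglb : is_glb E m).
  { split.
    - intros y Hy. assert (Hy' : E (- - y)) by (rewrite Ropp_involutive; auto).
      specialize (Hl1 _ Hy'). unfold m. lra.
    - intros m' Hm'. assert (l <= - m').
      { apply Hl2. intros z Hz. specialize (Hm' _ Hz). lra. }
      unfold m. lra. }
  assert (Hlow : L0 <= m) by (apply (proj2 Hglb); exact HL0).
  assert (Jseq : forall L, exists J, P_pref (h J) (2*(n+L)) r <= mu).
  { induction L.
    - exists j0. rewrite Nat.add_0_r. unfold mu, f. lra.
    - destruct IHL as [J HJ]. destruct (F2 J (n+L)%nat) as [k [Hk0 Hk]].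
      exists (J + b ^ Z.of_nat (n+L) * k)%Z.
      replace (2 * (n + S L))%nat with (S (S (2*(n+L)))) by lia.
      unfold P_pref in *. cbn [sum_lt].
      rewrite (sum_lt_ext _ (fun i => IZR (h J i) * r ^ i)).
      2:{ intros i Hi. rewrite Hk; auto. }
      rewrite Hk0.
      assert (0 <= IZR (h (J + b ^ Z.of_nat (n + L) * k)%Z (S (2 * (n + L))))) by (apply IZR_le; apply Hd).
      assert (Hp := pow2_pos r (n+L) ltac:(lra)).
      assert (r ^ S (2*(n+L)) < 0) by (change (r ^ S (2*(n+L))) with (r * r ^ (2*(n+L))); nra).
      assert (IZR (h (J + b ^ Z.of_nat (n + L) * k)%Z (S (2 * (n + L)))) * r ^ S (2 * (n + L)) <= 0) by nra.
      lra. }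
  assert (Hup : m <= mu).
  { destruct (Rle_or_lt m mu) as [H|H]; auto. exfalso.
    destruct (pow_lt_1_zero (r^2) ltac:(rewrite Rabs_right; simpl; nra) ((m - mu)/C)) as [N0 HN0].
    { apply Rdiv_lt_0_compat; lra. }
    specialize (HN0 (n + N0)%nat ltac:(lia)).
    destruct (Jseq N0) as [J HJ].
    destruct (series_exists r b Hr1 hb (h J) (Hd J)) as [y Hy].
    destruct (series_bounds r b Hr1 hb (h J) (Hd J) y Hy (n+N0)) as [_ H2].
    assert (Hm : m <= y) by (apply (proj1 Hglb); exists J; auto).
    rewrite <- pow_mult in HN0. rewrite Rabs_right in HN0 by (left; apply pow2_pos; lra).
    apply (Rmult_lt_compat_r C) in HN0; auto.
    unfold Rdiv in HN0. rewrite Rmult_assoc, Rinv_l, Rmult_1_r in HN0 by lra.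
    unfold P_pref in HJ. fold C in H2. lra. }
  exists m, mu. split; [exact Hglb|]. split.
  - split.
    + exists j0. split; [lia|reflexivity].
    + intros j _. apply Hmu.
  - set (D := r ^ (2*n) * C).
    assert (HD : 0 < D) by (apply Rmult_lt_0_compat; [apply pow2_pos; lra|auto]).
    exists ((m - mu) / D).
    assert (Ht : (m - mu) / D * D = m - mu) by (field; lra).
    fold C. unfold L0 in Hlow. fold D in Hlow.
    split; [split|].
    + destruct (Rle_or_lt r ((m - mu) / D)) as [H|H]; auto. exfalso. nra.
    + destruct (Rle_or_lt ((m - mu) / D) 0) as [H|H]; auto. exfalso. nra.
    + rewrite Rmult_comm, Ht. ring.
Qed.
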